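(* The monomials $X_1^rX_2^s(X_2^* )^t(X_1^* )^u(Q')^v$, $r,s,t,u,v\in\mathbb Z_{\ge0}$, where $Q'=Q-X_1X_1^*-X_2X_2^*$, form a $\mathbb C$-linear basis of $\mathcal X$.
   Context: Fix $0<q<1$. $\mathcal X$ is the unital complex $*$-algebra generated by $X_1,X_1^*,X_2,X_2^*,Q$ with involution $(X_i)^*=X_i^*$, $Q^*=Q$, subject to the relations $X_1X_2=qX_2X_1$, $X_1^*X_2=qX_2X_1^*$, $X_2^*X_2=q^2X_2X_2^*+(1-q^2)Q$, $X_1^*X_1=q^2X_1X_1^*+(1-q^2)(Q-X_2X_2^* )$, $Q$ central, together with the $*$-images of these relations. *)

(* Defs.v *)
From HB Require Import structures.
From mathcomp Require Import all_boot all_order all_algebra.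
From mathcomp Require Import complex reals.
Set Implicit Arguments. Unset Strict Implicit. Unset Printing Implicit Defensive.
Import Order.TTheory GRing.Theory Num.Theory.
Local Open Scope ring_scope.
Local Open Scope complex_scope.

Definition gen := 'I_5.
Definition gX1  : gen := @Ordinal 5 0 isT.
Definition gX1s : gen := @Ordinal 5 1 isT.
Definition gX2  : gen := @Ordinal 5 2 isT.
Definition gX2s : gen := @Ordinal 5 3 isT.
Definition gQ   : gen := @Ordinal 5 4 isT.

Section FreeAlg.
Variable R : realType.
Local Notation C := (R[i]).

(* Noncommutative polynomials over C in the letters gen: functions from words
   to coefficients (the free algebra consists of the finitely supported ones). *)
Definition elt := seq gen -> C.

Definition ezero : elt := fun _ => 0.
Definition eadd (f g : elt) : elt := fun w => f w + g w.
Definition escale (a : C) (f : elt) : elt := fun w => a * f w.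
Definition esub (f g : elt) : elt := eadd f (escale (-1) g).
Definition emul (f g : elt) : elt :=
  fun w => \sum_(i < (size w).+1) f (take i w) * g (drop i w).
Definition eword (u : seq gen) : elt := fun w => (w == u)%:R.
Definition eone : elt := eword [::].
Definition egen (x : gen) : elt := eword [:: x].
Definition epow (f : elt) (n : nat) : elt := iter n (emul f) eone.

Definition fin_supp (f : elt) : Prop :=
  exists s : seq (seq gen), forall w, w \notin s -> f w = 0.

Definition X1 := egen gX1.
Definition X1s := egen gX1s.
Definition X2 := egen gX2.
Definition X2s := egen gX2s.
Definition Q := egen gQ.

Definition Q' : elt := esub (esub Q (emul X1 X1s)) (emul X2 X2s).

(* The defining relations of \mathcal X (each written as lhs - rhs),
   together with their *-images. *)
Definition rels (q : R) : seq elt :=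
  let qc : C := q%:C in
  [:: esub (emul X1 X2) (escale qc (emul X2 X1));
      esub (emul X1s X2) (escale qc (emul X2 X1s));
      esub (emul X2s X2) (eadd (escale (qc ^+ 2) (emul X2 X2s)) (escale (1 - qc ^+ 2) Q));
      esub (emul X1s X1) (eadd (escale (qc ^+ 2) (emul X1 X1s))
                               (escale (1 - qc ^+ 2) (esub Q (emul X2 X2s))));
      esub (emul Q X1) (emul X1 Q);
      esub (emul Q X1s) (emul X1s Q);
      esub (emul Q X2) (emul X2 Q);
      esub (emul Q X2s) (emul X2s Q);
      (* *-images of the first two relations (the others are self-adjoint
         or have *-images already in the list) *)
      esub (emul X2s X1s) (escale qc (emul X1s X2s));
      esub (emul X2s X1) (escale qc (emul X1 X2s))].

Inductive in_ideal (q : R) : elt -> Prop :=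
| ideal_rel i : (i < size (rels q))%N -> in_ideal q (nth (@ezero) (rels q) i)
| ideal_add f g : in_ideal q f -> in_ideal q g -> in_ideal q (eadd f g)
| ideal_scale a f : in_ideal q f -> in_ideal q (escale a f)
| ideal_lmul u f : in_ideal q f -> in_ideal q (emul (eword u) f)
| ideal_rmul u f : in_ideal q f -> in_ideal q (emul f (eword u))
| ideal_ext f g : in_ideal q f -> (forall w, f w = g w) -> in_ideal q g.

Definition idx := (nat * nat * nat * nat * nat)%type.
Definition mono (m : idx) : elt :=
  let '(r, s, t, u, v) := m in
  emul (emul (emul (emul (epow X1 r) (epow X2 s)) (epow X2s t)) (epow X1s u))
       (epow Q' v).

Definition lincomb (s : seq idx) (c : idx -> C) : elt :=
  foldr (fun m acc => eadd (escale (c m) (mono m)) acc) ezero s.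

End FreeAlg.

(* Main.v *)
Require Import Defs.
From HB Require Import structures.
From mathcomp Require Import all_boot all_order all_algebra.
From mathcomp Require Import complex reals.
From mathcomp Require Import ring.
From mathcomp Require Import zify.
From Stdlib Require Import FunctionalExtensionality.
Set Implicit Arguments. Unset Strict Implicit. Unset Printing Implicit Defensive.
Import Order.TTheory GRing.Theory Num.Theory.
Local Open Scope ring_scope.
Local Open Scope complex_scope.


Section A.
Variable R : realType.
Local Notation C := (R[i]).
Local Notation E := (elt R).

Lemma eext (f g : E) : (forall w, f w = g w) -> f = g.
Proof. exact: functional_extensionality. Qed.

Lemma emulDl (f g h : E) : emul (eadd f g) h = eadd (emul f h) (emul g h).
Proof. by apply: eext => w; rewrite /emul /eadd -big_split; apply: eq_bigr => i _; rewrite mulrDl. Qed.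
Lemma emulDr (f g h : E) : emul f (eadd g h) = eadd (emul f g) (emul f h).
Proof. by apply: eext => w; rewrite /emul /eadd -big_split; apply: eq_bigr => i _; rewrite mulrDr. Qed.
Lemma emulZl a (f g : E) : emul (escale a f) g = escale a (emul f g).
Proof. by apply: eext => w; rewrite /emul /escale mulr_sumr; apply: eq_bigr => i _; rewrite mulrA. Qed.
Lemma emulZr a (f g : E) : emul f (escale a g) = escale a (emul f g).
Proof. by apply: eext => w; rewrite /emul /escale mulr_sumr; apply: eq_bigr => i _; rewrite mulrCA. Qed.
Lemma emul0l (f : E) : emul (ezero R) f = ezero R.
Proof. by apply: eext => w; rewrite /emul /ezero big1 // => i _; rewrite mul0r. Qed.
Lemma emul0r (f : E) : emul f (ezero R) = ezero R.
Proof. by apply: eext => w; rewrite /emul /ezero big1 // => i _; rewrite mulr0. Qed.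

Lemma emul_word (a b : seq gen) : emul (eword R a) (eword R b) = eword R (a ++ b).
Proof.
apply: eext => w; rewrite /emul /eword.
have [->|neq] := eqVneq w (a ++ b).
  have ha : (size a < (size (a ++ b)).+1)%N by rewrite size_cat ltnS leq_addr.
  rewrite (bigD1 (Ordinal ha)) //= take_size_cat // drop_size_cat // !eqxx mulr1.
  rewrite big1 ?addr0 // => i /eqP ni.
  case: eqP => ia; last by rewrite mul0r.
  exfalso; apply: ni; apply: val_inj => /=.
  have := ltn_ord i; rewrite ltnS => il.
  by move: (size_takel il); rewrite ia => ->.
rewrite big1 // => i _.
case: eqP => ia; last by rewrite mul0r.
case: eqP => ib; last by rewrite mulr0.
by move: neq; rewrite -ia -ib cat_take_drop eqxx.
Qed.

Lemma emul1l (f : E) : emul (eone R) f = f.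
Proof.
apply: eext => w; rewrite /emul /eone /eword big_ord_recl /= take0 eqxx mul1r drop0.
rewrite big1 ?addr0 // => i _.
have hi : (bump 0 i <= size w)%N by have := ltn_ord (lift ord0 i).
suff /negbTE -> : take (bump 0 i) w != [::] by rewrite mul0r.
by rewrite -size_eq0 size_takel.
Qed.

Lemma emul1r (f : E) : emul f (eone R) = f.
Proof.
apply: eext => w; rewrite /emul /eone /eword big_ord_recr /= drop_size take_size eqxx mulr1.
rewrite big1 ?add0r // => i _.
suff /negbTE -> : drop i w != [::] by rewrite mulr0.
by rewrite -size_eq0 size_drop subn_eq0 -ltnNge ltn_ord.
Qed.

Lemma emulE (f g : E) w :
  emul f g w = \sum_(0 <= i < (size w).+1) f (take i w) * g (drop i w).
Proof. by rewrite big_mkord. Qed.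

Lemma emulA (f g h : E) : emul (emul f g) h = emul f (emul g h).
Proof.
apply: eext => w; rewrite !emulE.
set n := size w.
pose F j i := f (take j w) * g (take (i - j) (drop j w)) * h (drop i w).
transitivity (\sum_(0 <= i < n.+1) \sum_(0 <= j < n.+1 | (j < i.+1)%N) F j i).
  rewrite big_nat_cond [RHS]big_nat_cond; apply: eq_bigr => i /andP[/andP[_ lin] _].
  rewrite ltnS in lin.
  rewrite emulE size_takel // (@big_nat_widen _ _ _ 0 i.+1 n.+1) // mulr_suml.
  apply: eq_bigr => j /= ji.
  by rewrite /F take_takel // take_drop subnK.
transitivity (\sum_(0 <= j < n.+1) \sum_(0 <= i < n.+1 | (j <= i)%N) F j i).
  by rewrite (@exchange_big_dep_nat _ _ _ 0 n.+1 0 n.+1 xpredT (fun i j => (j < i.+1)%N) xpredT).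
rewrite big_nat_cond [RHS]big_nat_cond; apply: eq_bigr => j /andP[/andP[_ jn] _].
rewrite ltnS in jn.
rewrite emulE size_drop mulr_sumr.
rewrite -(@big_nat_widenl _ _ _ j 0 n.+1 xpredT) // -{1}(add0n j) big_addn subSn //.
apply: eq_bigr => k _.
by rewrite /F addnK mulrA drop_drop.
Qed.

End A.


Section B.
Variable R : realType.
Local Notation C := (R[i]).
Local Notation E := (elt R).

Definition bnd (f : E) N := forall w, (N <= size w)%N -> f w = 0.

Lemma bnd_word u : bnd (eword R u) (size u).+1.
Proof. move=> w hw; rewrite /eword; case: eqP => // ew; by rewrite ew ltnn in hw. Qed.

Lemma bnd_le f N M : bnd f N -> (N <= M)%N -> bnd f M.
Proof. by move=> hf hNM w hw; apply: hf; apply: leq_trans hw. Qed.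

Lemma bnd_add f g N M : bnd f N -> bnd g M -> bnd (eadd f g) (maxn N M).
Proof.
move=> hf hg w hw; rewrite /eadd hf ?hg ?addr0 //; apply: leq_trans hw;
  by rewrite ?leq_maxl ?leq_maxr.
Qed.

Lemma bnd_scale a f N : bnd f N -> bnd (escale a f) N.
Proof. by move=> hf w hw; rewrite /escale hf ?mulr0. Qed.

Lemma bnd_mul f g N M : bnd f N -> bnd g M -> bnd (emul f g) (N + M).
Proof.
move=> hf hg w hw; rewrite emulE big1 // => i _.
case: (leqP N (size (take i w))) => hN; first by rewrite hf ?mul0r.
rewrite hg ?mulr0 //.
have := cat_take_drop i w; move=> /(congr1 size); rewrite size_cat => hs.
rewrite -(leq_add2l (size (take i w))) hs.
by apply: leq_trans hw; rewrite leq_add2r ltnW.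
Qed.

Lemma bnd_zero : bnd (ezero R) 0.
Proof. by []. Qed.

Fixpoint wl n : seq (seq gen) :=
  if n is n'.+1 then [seq x :: w | x <- enum gen, w <- wl n'] else [:: [::]].
Fixpoint W N : seq (seq gen) := if N is N'.+1 then W N' ++ wl N' else [::].

Lemma mem_wl n w : (w \in wl n) = (size w == n).
Proof.
elim: n w => [|n IH] w /=; first by rewrite inE size_eq0.
apply/allpairsP/idP => [[[x v] /= [_ hv ->]]|].
  by rewrite /= eqSS -IH.
case: w => [//|x v] /=; rewrite eqSS -IH => hv.
by exists (x, v); rewrite mem_enum.
Qed.

Lemma uniq_wl n : uniq (wl n).
Proof.
elim: n => [//|n IH] /=.
apply: allpairs_uniq => //; first exact: enum_uniq.
by move=> [x v] [y u] _ _ /= [-> ->].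
Qed.

Lemma mem_W N w : (w \in W N) = (size w < N)%N.
Proof.
elim: N => [|N IH]. by []. 
by rewrite /= mem_cat IH mem_wl orbC -leq_eqVlt.
Qed.

Lemma uniq_W N : uniq (W N).
Proof.
elim: N => [//|N IH] /=; rewrite cat_uniq IH uniq_wl andbT /=.
apply/hasPn => w; rewrite mem_wl mem_W => /eqP ->; by rewrite ltnn.
Qed.

Lemma sum_word (s : seq (seq gen)) (F : seq gen -> C) v : uniq s ->
  \sum_(w <- s) F w * eword R w v = if v \in s then F v else 0.
Proof.
elim: s => [|x s IH] /=; first by rewrite big_nil.
move=> /andP[xs us]; rewrite big_cons IH // inE /eword.
case: eqP => [->|nvx] /=; first by rewrite (negbTE xs) mulr1 addr0.
by rewrite mulr0 add0r.
Qed.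

Definition esum (s : seq (seq gen)) (c : seq gen -> C) : E :=
  fun v => \sum_(w <- s) c w * eword R w v.

Lemma esum_nil c : esum [::] c = ezero R.
Proof. by apply: eext => v; rewrite /esum big_nil. Qed.
Lemma esum_cons w s c : esum (w :: s) c = eadd (escale (c w) (eword R w)) (esum s c).
Proof. by apply: eext => v; rewrite /esum big_cons. Qed.

Lemma bnd_decomp f N : bnd f N -> f = esum (W N) f.
Proof.
move=> hf; apply: eext => v; rewrite /esum sum_word ?uniq_W // mem_W.
by case: ltnP => // hv; rewrite hf.
Qed.

Lemma fin_bnd (f : E) : fin_supp f -> exists N, bnd f N.
Proof.
move=> [s hs]; exists (\max_(w <- s) size w).+1 => w hw; apply: hs.
apply/negP => ws; move: hw; rewrite ltnNge => /negP; apply.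
by rewrite (leq_bigmax_seq _ ws).
Qed.

Variable q : R.

Lemma ideal0 : in_ideal q (ezero R).
Proof.
apply: (@ideal_ext _ _ (escale 0 (nth (ezero R) (rels q) 0))).
  by apply: ideal_scale; apply: ideal_rel.
by move=> w; rewrite /escale mul0r.
Qed.

Lemma ideal_eq f g : in_ideal q f -> f = g -> in_ideal q g.
Proof. by move=> h <-. Qed.

Lemma ideal_lmul_esum s c f : in_ideal q f -> in_ideal q (emul (esum s c) f).
Proof.
move=> hf; elim: s => [|w s IH]; first by rewrite esum_nil emul0l; apply: ideal0.
by rewrite esum_cons emulDl emulZl; apply: ideal_add => //; apply: ideal_scale; apply: ideal_lmul.
Qed.

Lemma ideal_rmul_esum s c f : in_ideal q f -> in_ideal q (emul f (esum s c)).
Proof.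
move=> hf; elim: s => [|w s IH]; first by rewrite esum_nil emul0r; apply: ideal0.
by rewrite esum_cons emulDr emulZr; apply: ideal_add => //; apply: ideal_scale; apply: ideal_rmul.
Qed.

Lemma ideal_lmulb g N f : bnd g N -> in_ideal q f -> in_ideal q (emul g f).
Proof. by move=> /bnd_decomp ->; apply: ideal_lmul_esum. Qed.
Lemma ideal_rmulb g N f : bnd g N -> in_ideal q f -> in_ideal q (emul f g).
Proof. by move=> /bnd_decomp ->; apply: ideal_rmul_esum. Qed.

Definition eqm (f g : E) := in_ideal q (esub f g).

Lemma eqm_eq f g : f = g -> eqm f g.
Proof.
move=> <-; rewrite /eqm; refine (ideal_eq ideal0 _); apply: eext => w; rewrite /esub /eadd /escale /ezero; ring.
Qed.
Lemma eqm_sym f g : eqm f g -> eqm g f.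
Proof.
move=> h; rewrite /eqm; refine (ideal_eq (ideal_scale (-1) h) _); apply: eext => w; rewrite /esub /eadd /escale; ring.
Qed.
Lemma eqm_trans f g h : eqm f g -> eqm g h -> eqm f h.
Proof.
move=> h1 h2; rewrite /eqm; refine (ideal_eq (ideal_add h1 h2) _); apply: eext => w; rewrite /esub /eadd /escale; ring.
Qed.
Lemma eqm_add f1 f2 g1 g2 : eqm f1 g1 -> eqm f2 g2 -> eqm (eadd f1 f2) (eadd g1 g2).
Proof.
move=> h1 h2; rewrite /eqm; refine (ideal_eq (ideal_add h1 h2) _); apply: eext => w; rewrite /esub /eadd /escale; ring.
Qed.
Lemma eqm_scale a f g : eqm f g -> eqm (escale a f) (escale a g).
Proof.
move=> h; rewrite /eqm; refine (ideal_eq (ideal_scale a h) _); apply: eext => w; rewrite /esub /eadd /escale; ring.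
Qed.
Lemma eqm_lmul h N f g : bnd h N -> eqm f g -> eqm (emul h f) (emul h g).
Proof.
move=> hb e; rewrite /eqm; refine (ideal_eq (ideal_lmulb hb e) _).
by rewrite /esub emulDr emulZr.
Qed.
Lemma eqm_rmul h N f g : bnd h N -> eqm f g -> eqm (emul f h) (emul g h).
Proof.
move=> hb e; rewrite /eqm; refine (ideal_eq (ideal_rmulb hb e) _).
by rewrite /esub emulDl emulZl.
Qed.
Lemma eqm_ideal f g h : in_ideal q h -> esub f g = h -> eqm f g.
Proof. by move=> hh e; rewrite /eqm e. Qed.

End B.


Section C.
Variable R : realType.
Variable q : R.
Hypothesis hq0 : 0 < q.
Local Notation C := (R[i]).
Local Notation E := (elt R).
Local Notation p := (q%:C : C).
Local Notation x1 := (X1 R).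
Local Notation x1s := (X1s R).
Local Notation x2 := (X2 R).
Local Notation x2s := (X2s R).
Local Notation qq := (Q R).
Local Notation qp := (Q' R).
Local Notation eqm := (eqm q).

Lemma pgt0 : 0 < p.
Proof. by rewrite -[0]/((0:R)%:C) ltcR. Qed.
Lemma pneq0 : p != 0.
Proof. by rewrite gt_eqF // pgt0. Qed.

Lemma tfield : (p ^+ 2 * p^-1 * p^-1 : C) = 1.
Proof. field. exact: pneq0. Qed.


Definition bndd (f : E) := exists N, bnd f N.
Lemma bndd_word u : bndd (eword R u). Proof. by exists (size u).+1; apply: bnd_word. Qed.
Lemma bndd_add f g : bndd f -> bndd g -> bndd (eadd f g).
Proof. by move=> [N hN] [M hM]; exists (maxn N M); apply: bnd_add. Qed.
Lemma bndd_scale a f : bndd f -> bndd (escale a f).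
Proof. by move=> [N hN]; exists N; apply: bnd_scale. Qed.
Lemma bndd_sub f g : bndd f -> bndd g -> bndd (esub f g).
Proof. by move=> hf hg; apply: bndd_add => //; apply: bndd_scale. Qed.
Lemma bndd_mul f g : bndd f -> bndd g -> bndd (emul f g).
Proof. by move=> [N hN] [M hM]; exists (N + M); apply: bnd_mul. Qed.
Lemma bndd_x1 : bndd x1. Proof. exact: bndd_word. Qed.
Lemma bndd_x2 : bndd x2. Proof. exact: bndd_word. Qed.
Lemma bndd_x1s : bndd x1s. Proof. exact: bndd_word. Qed.
Lemma bndd_x2s : bndd x2s. Proof. exact: bndd_word. Qed.
Lemma bndd_qq : bndd qq. Proof. exact: bndd_word. Qed.
Lemma bndd_qp : bndd qp.
Proof.
by apply: bndd_sub; [apply: bndd_sub; [exact: bndd_qq|]|]; apply: bndd_mul; apply: bndd_word.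
Qed.
Lemma bndd_epow f n : bndd f -> bndd (epow f n).
Proof. move=> hf; elim: n => [|n IH]; first exact: bndd_word. exact: bndd_mul. Qed.
Lemma bndd_mono m : bndd (mono R m).
Proof.
case: m => [[[[r s] t] u] v]; rewrite /mono.
apply: bndd_mul (bndd_epow _ bndd_qp).
apply: bndd_mul (bndd_epow _ bndd_x1s).
apply: bndd_mul (bndd_epow _ bndd_x2s).
exact: bndd_mul (bndd_epow _ bndd_x1) (bndd_epow _ bndd_x2).
Qed.

Lemma eqm_lmul' h f g : bndd h -> eqm f g -> eqm (emul h f) (emul h g).
Proof. by move=> [N hN]; exact: (eqm_lmul hN). Qed.

Lemma ideal_ctx L r M : in_ideal q r -> bndd L -> bndd M -> in_ideal q (emul L (emul r M)).
Proof.
move=> hr [N hN] [K hK]; apply: (ideal_lmulb hN); exact: (ideal_rmulb hK).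
Qed.
Lemma ideal_ctxr r M : in_ideal q r -> bndd M -> in_ideal q (emul r M).
Proof. by move=> hr [K hK]; exact: (ideal_rmulb hK). Qed.

Lemma rel0 : in_ideal q (esub (emul x1 x2) (escale p (emul x2 x1))).
Proof. exact: (@ideal_rel R q 0 isT). Qed.
Lemma rel1 : in_ideal q (esub (emul x1s x2) (escale p (emul x2 x1s))).
Proof. exact: (@ideal_rel R q 1 isT). Qed.
Lemma rel2 : in_ideal q (esub (emul x2s x2) (eadd (escale (p ^+ 2) (emul x2 x2s)) (escale (1 - p ^+ 2) qq))).
Proof. exact: (@ideal_rel R q 2 isT). Qed.
Lemma rel3 : in_ideal q (esub (emul x1s x1) (eadd (escale (p ^+ 2) (emul x1 x1s))
                               (escale (1 - p ^+ 2) (esub qq (emul x2 x2s))))).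
Proof. exact: (@ideal_rel R q 3 isT). Qed.
Lemma rel4 : in_ideal q (esub (emul qq x1) (emul x1 qq)).
Proof. exact: (@ideal_rel R q 4 isT). Qed.
Lemma rel5 : in_ideal q (esub (emul qq x1s) (emul x1s qq)).
Proof. exact: (@ideal_rel R q 5 isT). Qed.
Lemma rel6 : in_ideal q (esub (emul qq x2) (emul x2 qq)).
Proof. exact: (@ideal_rel R q 6 isT). Qed.
Lemma rel7 : in_ideal q (esub (emul qq x2s) (emul x2s qq)).
Proof. exact: (@ideal_rel R q 7 isT). Qed.
Lemma rel8 : in_ideal q (esub (emul x2s x1s) (escale p (emul x1s x2s))).
Proof. exact: (@ideal_rel R q 8 isT). Qed.
Lemma rel9 : in_ideal q (esub (emul x2s x1) (escale p (emul x1 x2s))).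
Proof. exact: (@ideal_rel R q 9 isT). Qed.

Ltac enorm := rewrite /esub /Q';
  repeat (rewrite emulDl || rewrite emulDr || rewrite emulZl || rewrite emulZr || rewrite emulA);
  apply: eext => w; rewrite /eadd /escale.

Lemma dA M : bndd M -> eqm (emul x2 (emul x1 M)) (escale p^-1 (emul x1 (emul x2 M))).
Proof.
move=> hM; apply: (eqm_ideal (h := escale (- p^-1) (emul (esub (emul x1 x2) (escale p (emul x2 x1))) M))).
  by apply: ideal_scale; apply: ideal_ctxr => //; apply: rel0.
enorm; field; exact: pneq0.
Qed.


Local Notation r0 := (esub (emul x1 x2) (escale p (emul x2 x1))).
Local Notation r1 := (esub (emul x1s x2) (escale p (emul x2 x1s))).
Local Notation r2 := (esub (emul x2s x2) (eadd (escale (p ^+ 2) (emul x2 x2s)) (escale (1 - p ^+ 2) qq))).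
Local Notation r3 := (esub (emul x1s x1) (eadd (escale (p ^+ 2) (emul x1 x1s))
                               (escale (1 - p ^+ 2) (esub qq (emul x2 x2s))))).
Local Notation r4 := (esub (emul qq x1) (emul x1 qq)).
Local Notation r5 := (esub (emul qq x1s) (emul x1s qq)).
Local Notation r6 := (esub (emul qq x2) (emul x2 qq)).
Local Notation r7 := (esub (emul qq x2s) (emul x2s qq)).
Local Notation r8 := (esub (emul x2s x1s) (escale p (emul x1s x2s))).
Local Notation r9 := (esub (emul x2s x1) (escale p (emul x1 x2s))).

Lemma dB M : bndd M -> eqm (emul x2s (emul x1 M)) (escale p (emul x1 (emul x2s M))).
Proof.
move=> hM; apply: (eqm_ideal (h := emul r9 M)); first exact: ideal_ctxr rel9 hM.
enorm; ring.
Qed.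
Lemma dC M : bndd M -> eqm (emul x1s (emul x2 M)) (escale p (emul x2 (emul x1s M))).
Proof.
move=> hM; apply: (eqm_ideal (h := emul r1 M)); first exact: ideal_ctxr rel1 hM.
enorm; ring.
Qed.
Lemma dD M : bndd M -> eqm (emul x1s (emul x2s M)) (escale p^-1 (emul x2s (emul x1s M))).
Proof.
move=> hM; apply: (eqm_ideal (h := escale (- p^-1) (emul r8 M))).
  by apply: ideal_scale; exact: ideal_ctxr rel8 hM.
enorm; field; exact: pneq0.
Qed.
Lemma dH M : bndd M -> eqm (emul x1s (emul x1 M))
   (eadd (emul x1 (emul x1s M)) (escale (1 - p ^+ 2) (emul qp M))).
Proof.
move=> hM; apply: (eqm_ideal (h := emul r3 M)); first exact: ideal_ctxr rel3 hM.
enorm; ring.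
Qed.
Lemma dI M : bndd M -> eqm (emul x2s (emul x2 M))
   (eadd (emul x2 (emul x2s M)) (escale (1 - p ^+ 2) (eadd (emul qp M) (emul x1 (emul x1s M))))).
Proof.
move=> hM; apply: (eqm_ideal (h := emul r2 M)); first exact: ideal_ctxr rel2 hM.
enorm; ring.
Qed.
Lemma dE M : bndd M -> eqm (emul qp (emul x1 M)) (escale (p ^+ 2) (emul x1 (emul qp M))).
Proof.
move=> hM; apply: (eqm_ideal (h := eadd (emul r4 M) (eadd (escale (-1) (emul x1 (emul r3 M)))
   (eadd (escale (-1) (emul x2 (emul r9 M))) (emul r0 (emul x2s M)))))).
  apply: ideal_add; first exact: ideal_ctxr rel4 hM.
  apply: ideal_add; first by apply: ideal_scale; exact: ideal_ctx rel3 bndd_x1 hM.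
  apply: ideal_add; first by apply: ideal_scale; exact: ideal_ctx rel9 bndd_x2 hM.
  exact: ideal_ctxr rel0 (bndd_mul bndd_x2s hM).
enorm; ring.
Qed.
Lemma dF M : bndd M -> eqm (emul qp (emul x2 M)) (escale (p ^+ 2) (emul x2 (emul qp M))).
Proof.
move=> hM; apply: (eqm_ideal (h := eadd (emul r6 M) (eadd (escale (-1) (emul x1 (emul r1 M)))
   (eadd (escale (- p) (emul r0 (emul x1s M))) (escale (-1) (emul x2 (emul r2 M))))))).
  apply: ideal_add; first exact: ideal_ctxr rel6 hM.
  apply: ideal_add; first by apply: ideal_scale; exact: ideal_ctx rel1 bndd_x1 hM.
  apply: ideal_add; first by apply: ideal_scale; exact: ideal_ctxr rel0 (bndd_mul bndd_x1s hM).
  by apply: ideal_scale; exact: ideal_ctx rel2 bndd_x2 hM.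
enorm; ring.
Qed.
Lemma dG1 M : bndd M -> eqm (emul qp (emul x1s M)) (escale (p ^+ 2)^-1 (emul x1s (emul qp M))).
Proof.
move=> hM; apply: (eqm_ideal (h := escale (p ^+ 2)^-1 (eadd (emul r5 M) (eadd (emul r3 (emul x1s M))
   (eadd (emul r1 (emul x2s M)) (escale (-1) (emul x2 (emul r8 M)))))))).
  apply: ideal_scale; apply: ideal_add; first exact: ideal_ctxr rel5 hM.
  apply: ideal_add; first exact: ideal_ctxr rel3 (bndd_mul bndd_x1s hM).
  apply: ideal_add; first exact: ideal_ctxr rel1 (bndd_mul bndd_x2s hM).
  by apply: ideal_scale; exact: ideal_ctx rel8 bndd_x2 hM.
enorm; field; exact: pneq0.
Qed.
Lemma dG2 M : bndd M -> eqm (emul qp (emul x2s M)) (escale (p ^+ 2)^-1 (emul x2s (emul qp M))).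
Proof.
move=> hM; apply: (eqm_ideal (h := escale (p ^+ 2)^-1 (eadd (emul r7 M) (eadd (emul r9 (emul x1s M))
   (eadd (escale p (emul x1 (emul r8 M))) (emul r2 (emul x2s M))))))).
  apply: ideal_scale; apply: ideal_add; first exact: ideal_ctxr rel7 hM.
  apply: ideal_add; first exact: ideal_ctxr rel9 (bndd_mul bndd_x1s hM).
  apply: ideal_add; first by apply: ideal_scale; exact: ideal_ctx rel8 bndd_x1 hM.
  exact: ideal_ctxr rel2 (bndd_mul bndd_x2s hM).
enorm; field; exact: pneq0.
Qed.

Definition lcl (L : seq (C * idx)) : E :=
  foldr (fun x acc => eadd (escale x.1 (mono R x.2)) acc) (ezero R) L.

Definition Sp (f : E) := exists L, eqm f (lcl L).

Lemma lcl_cat L1 L2 : lcl (L1 ++ L2) = eadd (lcl L1) (lcl L2).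
Proof.
elim: L1 => [|x L IH] /=; apply: eext => w; rewrite /eadd /ezero ?add0r //.
by rewrite IH /eadd addrA.
Qed.
Lemma lcl_scale a L : lcl [seq (a * x.1, x.2) | x <- L] = escale a (lcl L).
Proof.
elim: L => [|x L IH] /=; apply: eext => w; rewrite /eadd /escale /ezero ?mulr0 //.
by rewrite IH /eadd /escale mulrDr mulrA.
Qed.

Lemma Sp_mono m : Sp (mono R m).
Proof. exists [:: (1, m)]; apply: eqm_eq; apply: eext => w; rewrite /= /eadd /escale /ezero; ring. Qed.
Lemma Sp_eqm f g : eqm f g -> Sp g -> Sp f.
Proof. by move=> e [L hL]; exists L; exact: eqm_trans e hL. Qed.
Lemma Sp_add f g : Sp f -> Sp g -> Sp (eadd f g).
Proof. by move=> [L1 h1] [L2 h2]; exists (L1 ++ L2); rewrite lcl_cat; exact: eqm_add. Qed.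
Lemma Sp_scale a f : Sp f -> Sp (escale a f).
Proof. by move=> [L h]; exists [seq (a * x.1, x.2) | x <- L]; rewrite lcl_scale; exact: eqm_scale. Qed.
Lemma Sp_zero : Sp (ezero R).
Proof. by exists [::]; apply: eqm_eq. Qed.
Lemma Sp_eq f g : f = g -> Sp g -> Sp f.
Proof. by move=> ->. Qed.

Lemma Sp_lmul h f : bndd h -> (forall m, Sp (emul h (mono R m))) -> Sp f -> Sp (emul h f).
Proof.
move=> hb hm [L hL]; apply: Sp_eqm (eqm_lmul' hb hL) _.
elim: L {hL} => [|x L IH] /=; first by rewrite emul0r; exact: Sp_zero.
by rewrite emulDr emulZr; apply: Sp_add => //; apply: Sp_scale.
Qed.

Definition Mo r s t u v := mono R (r, s, t, u, v).

Lemma epowS (f : E) n : epow f n.+1 = emul f (epow f n). Proof. by []. Qed.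
Lemma epow0 (f : E) : epow f 0 = eone R. Proof. by []. Qed.

Lemma Mo1 r s t u v : Mo r.+1 s t u v = emul x1 (Mo r s t u v).
Proof. by rewrite /Mo /mono epowS !emulA. Qed.
Lemma Mo2 s t u v : Mo 0 s.+1 t u v = emul x2 (Mo 0 s t u v).
Proof. by rewrite /Mo /mono epow0 !emul1l epowS !emulA. Qed.
Lemma Mo3 t u v : Mo 0 0 t.+1 u v = emul x2s (Mo 0 0 t u v).
Proof. by rewrite /Mo /mono !epow0 !emul1l epowS !emulA. Qed.
Lemma Mo4 u v : Mo 0 0 0 u.+1 v = emul x1s (Mo 0 0 0 u v).
Proof. by rewrite /Mo /mono !epow0 !emul1l epowS !emulA. Qed.
Lemma Mo5 v : Mo 0 0 0 0 v.+1 = emul qp (Mo 0 0 0 0 v).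
Proof. by rewrite /Mo /mono !epow0 !emul1l epowS. Qed.
Lemma Mo0 : Mo 0 0 0 0 0 = eone R.
Proof. by rewrite /Mo /mono !epow0 !emul1l. Qed.
Lemma bndd_Mo r s t u v : bndd (Mo r s t u v).
Proof. exact: bndd_mono. Qed.

Lemma SpMo r s t u v : Sp (Mo r s t u v). Proof. exact: Sp_mono. Qed.

Lemma SX1m m : Sp (emul x1 (mono R m)).
Proof. case: m => [[[[r s] t] u] v]; rewrite -/(Mo _ _ _ _ _) -Mo1; exact: SpMo. Qed.
Lemma SX1 f : Sp f -> Sp (emul x1 f).
Proof. by apply: Sp_lmul bndd_x1 SX1m. Qed.

Lemma SX2m m : Sp (emul x2 (mono R m)).
Proof.
case: m => [[[[r s] t] u] v]; rewrite -/(Mo _ _ _ _ _).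
elim: r => [|r IH]; first by rewrite -Mo2; exact: SpMo.
rewrite Mo1; apply: Sp_eqm (dA (bndd_Mo _ _ _ _ _)) _.
by apply: Sp_scale; apply: SX1.
Qed.
Lemma SX2 f : Sp f -> Sp (emul x2 f).
Proof. by apply: Sp_lmul bndd_x2 SX2m. Qed.

Lemma SQp00 t u v : exists c, eqm (emul qp (Mo 0 0 t u v)) (escale c (Mo 0 0 t u v.+1)).
Proof.
elim: t => [|t IH].
  elim: u => [|u IH].
    exists 1; apply: eqm_eq; rewrite -Mo5; apply: eext => w; rewrite /escale; ring.
  move: IH => [c hc]; exists ((p ^+ 2)^-1 * c); rewrite Mo4.
  apply: eqm_trans (dG1 (bndd_Mo _ _ _ _ _)) _.
  apply: eqm_trans (eqm_scale _ (eqm_lmul' bndd_x1s hc)) _.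
  by apply: eqm_eq; rewrite emulZr Mo4; apply: eext => w; rewrite /escale mulrA.
move: IH => [c hc]; exists ((p ^+ 2)^-1 * c); rewrite Mo3.
apply: eqm_trans (dG2 (bndd_Mo _ _ _ _ _)) _.
apply: eqm_trans (eqm_scale _ (eqm_lmul' bndd_x2s hc)) _.
by apply: eqm_eq; rewrite emulZr Mo3; apply: eext => w; rewrite /escale mulrA.
Qed.

Lemma SQpm m : Sp (emul qp (mono R m)).
Proof.
case: m => [[[[r s] t] u] v]; rewrite -/(Mo _ _ _ _ _).
elim: r => [|r IH].
  elim: s => [|s IH].
    have [c hc] := SQp00 t u v; apply: Sp_eqm hc _; apply: Sp_scale; exact: SpMo.
  rewrite Mo2; apply: Sp_eqm (dF (bndd_Mo _ _ _ _ _)) _.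
  by apply: Sp_scale; apply: SX2.
rewrite Mo1; apply: Sp_eqm (dE (bndd_Mo _ _ _ _ _)) _.
by apply: Sp_scale; apply: SX1.
Qed.
Lemma SQp f : Sp f -> Sp (emul qp f).
Proof. by apply: Sp_lmul bndd_qp SQpm. Qed.

Lemma SX1s00 t u v : exists c, eqm (emul x1s (Mo 0 0 t u v)) (escale c (Mo 0 0 t u.+1 v)).
Proof.
elim: t => [|t IH].
  exists 1; apply: eqm_eq; rewrite -Mo4; apply: eext => w; rewrite /escale; ring.
move: IH => [c hc]; exists (p^-1 * c); rewrite Mo3.
apply: eqm_trans (dD (bndd_Mo _ _ _ _ _)) _.
apply: eqm_trans (eqm_scale _ (eqm_lmul' bndd_x2s hc)) _.
by apply: eqm_eq; rewrite emulZr Mo3; apply: eext => w; rewrite /escale mulrA.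
Qed.

Lemma SX1sm m : Sp (emul x1s (mono R m)).
Proof.
case: m => [[[[r s] t] u] v]; rewrite -/(Mo _ _ _ _ _).
elim: r => [|r IH].
  elim: s => [|s IH].
    have [c hc] := SX1s00 t u v; apply: Sp_eqm hc _; apply: Sp_scale; exact: SpMo.
  rewrite Mo2; apply: Sp_eqm (dC (bndd_Mo _ _ _ _ _)) _.
  by apply: Sp_scale; apply: SX2.
rewrite Mo1; apply: Sp_eqm (dH (bndd_Mo _ _ _ _ _)) _.
apply: Sp_add; first exact: SX1.
by apply: Sp_scale; apply: SQp; apply: SpMo.
Qed.
Lemma SX1s f : Sp f -> Sp (emul x1s f).
Proof. by apply: Sp_lmul bndd_x1s SX1sm. Qed.

Lemma SX2sm m : Sp (emul x2s (mono R m)).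
Proof.
case: m => [[[[r s] t] u] v]; rewrite -/(Mo _ _ _ _ _).
elim: r => [|r IH].
  elim: s => [|s IH].
    by rewrite -Mo3; exact: SpMo.
  rewrite Mo2; apply: Sp_eqm (dI (bndd_Mo _ _ _ _ _)) _.
  apply: Sp_add; first exact: SX2.
  apply: Sp_scale; apply: Sp_add; first by apply: SQp; apply: SpMo.
  by apply: SX1; apply: SX1s; apply: SpMo.
rewrite Mo1; apply: Sp_eqm (dB (bndd_Mo _ _ _ _ _)) _.
by apply: Sp_scale; apply: SX1.
Qed.
Lemma SX2s f : Sp f -> Sp (emul x2s f).
Proof. by apply: Sp_lmul bndd_x2s SX2sm. Qed.

Lemma Qdecomp : qq = eadd qp (eadd (emul x1 x1s) (emul x2 x2s)).
Proof. by apply: eext => w; rewrite /Q' /esub /eadd /escale; ring. Qed.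

Lemma SQ f : Sp f -> Sp (emul qq f).
Proof.
move=> hf; rewrite Qdecomp (emulDl qp) (emulDl (emul x1 x1s)) !emulA.
apply: Sp_add; first exact: SQp.
by apply: Sp_add; [apply: SX1; apply: SX1s | apply: SX2; apply: SX2s].
Qed.

Lemma Sgen (x : gen) f : Sp f -> Sp (emul (egen R x) f).
Proof.
case: x => [[|[|[|[|[|n]]]]] hx] //.
- by rewrite (_ : Ordinal hx = gX1); [exact: SX1 | exact: val_inj].
- by rewrite (_ : Ordinal hx = gX1s); [exact: SX1s | exact: val_inj].
- by rewrite (_ : Ordinal hx = gX2); [exact: SX2 | exact: val_inj].
- by rewrite (_ : Ordinal hx = gX2s); [exact: SX2s | exact: val_inj].
- by rewrite (_ : Ordinal hx = gQ); [exact: SQ | exact: val_inj].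
Qed.

Lemma Sword w : Sp (eword R w).
Proof.
elim: w => [|x w IH]; first by rewrite -/(eone R) -Mo0; exact: SpMo.
by rewrite (_ : x :: w = [:: x] ++ w) // -emul_word; apply: Sgen.
Qed.

Lemma Sesum s c : Sp (esum s c).
Proof.
elim: s => [|w s IH]; first by rewrite esum_nil; exact: Sp_zero.
by rewrite esum_cons; apply: Sp_add => //; apply: Sp_scale; apply: Sword.
Qed.

End C.


Section E.
Variable R : realType.
Variable q : R.
Hypothesis hq0 : 0 < q.
Local Notation C := (R[i]).
Local Notation E := (elt R).
Local Notation p := (q%:C : C).
Local Notation pi := (q%:C^-1 : C).

Lemma pneq0' : p != 0.
Proof. by rewrite gt_eqF // -[0]/((0:R)%:C) ltcR. Qed.

Definition V := idx -> C.
Definition app (T : idx -> seq (C * idx)) (g : V) : V :=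
  fun m => \sum_(y <- T m) y.1 * g y.2.

Definition TA1 (m : idx) : seq (C * idx) := let '(r,s,t,u,v) := m in
  [:: ((0 < r)%N%:R, (r.-1,s,t,u,v))].
Definition TA2 (m : idx) : seq (C * idx) := let '(r,s,t,u,v) := m in
  [:: ((0 < s)%N%:R * pi ^+ r, (r,s.-1,t,u,v))].
Definition TB2 (m : idx) : seq (C * idx) := let '(r,s,t,u,v) := m in
  [:: ((0 < t)%N%:R * p ^+ r, (r,s,t.-1,u,v));
      ((0 < v)%N%:R * p ^+ r * (1 - p ^+ s.+1 * p ^+ s.+1) * pi ^+ t * pi ^+ t * pi ^+ u * pi ^+ u,
        (r,s.+1,t,u,v.-1));
      ((0 < r)%N%:R * (0 < u)%N%:R * p ^+ r * pi * (1 - p ^+ s.+1 * p ^+ s.+1) * pi ^+ s * pi ^+ t,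
        (r.-1,s.+1,t,u.-1,v))].
Definition TB1 (m : idx) : seq (C * idx) := let '(r,s,t,u,v) := m in
  [:: ((0 < u)%N%:R * p ^+ s * pi ^+ t, (r,s,t,u.-1,v));
      ((0 < v)%N%:R * (1 - p ^+ r.+1 * p ^+ r.+1) * p ^+ s * p ^+ s * pi ^+ t * pi ^+ t * pi ^+ u * pi ^+ u,
        (r.+1,s,t,u,v.-1))].
Definition TP (m : idx) : seq (C * idx) := let '(r,s,t,u,v) := m in
  [:: ((0 < v)%N%:R * p ^+ r * p ^+ r * p ^+ s * p ^+ s * pi ^+ t * pi ^+ t * pi ^+ u * pi ^+ u,
        (r,s,t,u,v.-1))].

Definition opA1 := app TA1.
Definition opA2 := app TA2.
Definition opB1 := app TB1.
Definition opB2 := app TB2.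
Definition opP := app TP.
Definition opQ (g : V) : V := fun m => opP g m + opA1 (opB1 g) m + opA2 (opB2 g) m.

Ltac rsimp := rewrite /opQ /opA1 /opA2 /opB1 /opB2 /opP /app /=;
  rewrite ?big_cons ?big_nil /=.
Ltac rfin := rewrite ?exprS ?expr0 ?exprVn; field;
  rewrite ?expf_neq0 ?mulf_neq0 ?invr_eq0 ?pneq0' //.



Ltac dd := case=> [[[[[|?] [|?]] [|?]] [|?]] [|?]]; rsimp; rfin.

Lemma id1 g m : opA1 (opA2 g) m = p * opA2 (opA1 g) m.
Proof. move: m; dd. Qed.
Lemma id2 g m : opB1 (opA2 g) m = p * opA2 (opB1 g) m.
Proof. move: m; dd. Qed.
Lemma id9 g m : opB2 (opB1 g) m = p * opB1 (opB2 g) m.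
Proof. move: m; dd. Qed.
Lemma id10 g m : opB2 (opA1 g) m = p * opA1 (opB2 g) m.
Proof. move: m; dd. Qed.
Lemma id3 g m : opB2 (opA2 g) m = p ^+ 2 * opA2 (opB2 g) m + (1 - p ^+ 2) * opQ g m.
Proof. move: m; dd. Qed.
Lemma id4 g m : opB1 (opA1 g) m = p ^+ 2 * opA1 (opB1 g) m + (1 - p ^+ 2) * (opQ g m - opA2 (opB2 g) m).
Proof. move: m; dd. Qed.
Lemma pA1 g m : opP (opA1 g) m = p ^+ 2 * opA1 (opP g) m.
Proof. move: m; dd. Qed.
Lemma pA2 g m : opP (opA2 g) m = p ^+ 2 * opA2 (opP g) m.
Proof. move: m; dd. Qed.
Lemma pB1 g m : opB1 (opP g) m = p ^+ 2 * opP (opB1 g) m.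
Proof. move: m; dd. Qed.
Lemma pB2 g m : opB2 (opP g) m = p ^+ 2 * opP (opB2 g) m.
Proof. move: m; dd. Qed.

Definition op (x : gen) : V -> V :=
  match nat_of_ord x with 0 => opA1 | 1 => opB1 | 2 => opA2 | 3 => opB2 | _ => opQ end.
Definition rw (w : seq gen) (h : V) : V := foldr op h w.

Lemma rw_cat a b h : rw (a ++ b) h = rw a (rw b h).
Proof. by rewrite /rw foldr_cat. Qed.

Lemma app_lin T (I : Type) (s : seq I) (c : I -> C) (h : I -> V) :
  app T (fun m => \sum_(i <- s) c i * h i m) = fun m => \sum_(i <- s) c i * app T (h i) m.
Proof.
apply: functional_extensionality => m; rewrite /app.
under eq_bigr do rewrite mulr_sumr.
rewrite exchange_big /=; apply: eq_bigr => i _.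
by rewrite mulr_sumr; apply: eq_bigr => y _; rewrite mulrCA.
Qed.

Lemma opQ_lin (I : Type) (s : seq I) (c : I -> C) (h : I -> V) :
  opQ (fun m => \sum_(i <- s) c i * h i m) = fun m => \sum_(i <- s) c i * opQ (h i) m.
Proof.
apply: functional_extensionality => m; rewrite /opQ /opA1 /opB1 /opA2 /opB2 /opP.
rewrite !app_lin /= -!big_split /=; apply: eq_bigr => i _; by rewrite !mulrDr.
Qed.

Lemma op_lin x (I : Type) (s : seq I) (c : I -> C) (h : I -> V) :
  op x (fun m => \sum_(i <- s) c i * h i m) = fun m => \sum_(i <- s) c i * op x (h i) m.
Proof.
rewrite /op; case: (nat_of_ord x) => [|[|[|[|n]]]] /=; [exact: app_lin|exact: app_lin|exact: app_lin|exact: app_lin|exact: opQ_lin].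

Qed.

Lemma rw_lin u (I : Type) (s : seq I) (c : I -> C) (h : I -> V) :
  rw u (fun m => \sum_(i <- s) c i * h i m) = fun m => \sum_(i <- s) c i * rw u (h i) m.
Proof. by elim: u => [//|x u IH] /=; rewrite /rw /= -/(rw u _) IH op_lin. Qed.

Lemma op0 x : op x (fun _ => 0) = fun _ => 0.
Proof.
have e : (fun _ : idx => (0:C)) =
   (fun m => \sum_(i <- [::]) (fun _ : unit => (0:C)) i * (fun (_:unit) (_:idx) => (0:C)) i m).
  by apply: functional_extensionality => m; rewrite big_nil.
by rewrite e op_lin; apply: functional_extensionality => m; rewrite !big_nil.
Qed.

Lemma rw0 u : rw u (fun _ => 0) = fun _ => 0.
Proof. by elim: u => [//|x u IH]; rewrite /rw /= -/(rw u _) IH op0. Qed.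

Definition rhoN N (f : E) (h : V) : V := fun m => \sum_(w <- W N) f w * rw w h m.

Lemma sumeq (T : eqType) (s : seq T) v (G : T -> C) : uniq s ->
  \sum_(w <- s) ((w == v)%:R * G w) = if v \in s then G v else 0.
Proof.
elim: s => [|x s IH] /=; first by rewrite big_nil.
move=> /andP[xs us]; rewrite big_cons IH // inE.
case: (eqVneq x v) => [<-|nvx] /=.
  by rewrite mul1r (negbTE xs) addr0.
by rewrite mul0r add0r.
Qed.

Lemma rhoN_word N u h m : (size u < N)%N -> rhoN N (eword R u) h m = rw u h m.
Proof.
move=> hu; rewrite /rhoN /eword.
transitivity (\sum_(w <- W N) ((w == u)%:R * rw w h m)).
  by apply: eq_bigr => w _; congr (_ * _); case: eqP => [->|e]; case: eqP.
by rewrite sumeq ?uniq_W // mem_W hu.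
Qed.

Lemma rhoN_add N f g h m : rhoN N (eadd f g) h m = rhoN N f h m + rhoN N g h m.
Proof. by rewrite /rhoN -big_split; apply: eq_bigr => w _; rewrite /eadd mulrDl. Qed.
Lemma rhoN_scale N a f h m : rhoN N (escale a f) h m = a * rhoN N f h m.
Proof. by rewrite /rhoN mulr_sumr; apply: eq_bigr => w _; rewrite /escale mulrA. Qed.
Lemma rhoN_sub N f g h m : rhoN N (esub f g) h m = rhoN N f h m - rhoN N g h m.
Proof. by rewrite /esub rhoN_add rhoN_scale mulN1r. Qed.
Lemma rhoN_zero N h m : rhoN N (ezero R) h m = 0.
Proof. by rewrite /rhoN big1 // => w _; rewrite /ezero mul0r. Qed.

Lemma sum_idx n k : \sum_(0 <= i < n) ((i == k)%:R : C) = (k < n)%N%:R.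
Proof.
elim: n => [|n IH]; first by rewrite big_geq.
rewrite big_nat_recr //= IH.
case: (ltngtP k n) => [kn|nk|->] /=.
- by rewrite addr0 (_ : (k < n.+1)%N = true) //; exact: ltnW.
- by rewrite addr0 (_ : (k < n.+1)%N = false) //; apply/negbTE; rewrite -leqNgt.
- by rewrite add0r ltnSn.
Qed.

Lemma cnt (a w : seq gen) :
  \sum_(0 <= i < (size w).+1) ((a == take i w)%:R : C) = (take (size a) w == a)%:R.
Proof.
transitivity (\sum_(0 <= i < (size w).+1) ((take (size a) w == a)%:R * ((i == size a)%:R : C))).
  rewrite big_nat_cond [RHS]big_nat_cond; apply: eq_bigr => i /andP[/andP[_ hi] _].
  rewrite ltnS in hi.
  case: (eqVneq a (take i w)) => [->|na].
    by rewrite size_takel // !eqxx mulr1.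
  case: (eqVneq i (size a)) => [ei|ni]; last by rewrite mulr0.
  rewrite -ei; have [e|ne] := eqVneq (take i w) a; last by rewrite mul0r.
  by move: na; rewrite e eqxx.
rewrite -mulr_sumr sum_idx.
case: eqP => [ea|_]; last by rewrite mul0r.
have hs : (size a <= size w)%N by rewrite -{1}ea size_take_min geq_minr.
by rewrite (_ : (size a < (size w).+1)%N = true) ?mul1r.
Qed.

Lemma eq_cat_split (w a b : seq gen) :
  (w == a ++ b) = (take (size a) w == a) && (b == drop (size a) w).
Proof.
apply/eqP/andP => [->|[/eqP e1 /eqP e2]].
  by rewrite take_size_cat // drop_size_cat // !eqxx.
by rewrite -[LHS](cat_take_drop (size a)) e1 e2.
Qed.

Lemma Kc N (F : seq gen -> seq gen -> C) :
  (forall a b, (N <= size a + size b)%N -> F a b = 0) ->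
  \sum_(w <- W N) \sum_(0 <= i < (size w).+1) F (take i w) (drop i w) =
  \sum_(a <- W N) \sum_(b <- W N) F a b.
Proof.
move=> hF; symmetry.
transitivity (\sum_(a <- W N) \sum_(b <- W N) \sum_(w <- W N) ((w == a ++ b)%:R * F a b)).
  apply: eq_bigr => a _; apply: eq_bigr => b _.
  rewrite (sumeq _ (fun _ => F a b)) ?uniq_W // mem_W size_cat.
  by case: ltnP => // h; rewrite hF.
under eq_bigr do rewrite exchange_big.
rewrite exchange_big big_seq [RHS]big_seq; apply: eq_bigr => w; rewrite mem_W => hw.
pose G a := F a (drop (size a) w).
transitivity (\sum_(a <- W N) ((take (size a) w == a)%:R * G a)).
  apply: eq_bigr => a _.
  transitivity (\sum_(b <- W N) ((take (size a) w == a)%:R * ((b == drop (size a) w)%:R * F a b))).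
    by apply: eq_bigr => b _; rewrite eq_cat_split; case: (take _ _ == a); rewrite ?mul1r ?mul0r.
  rewrite -mulr_sumr sumeq ?uniq_W // mem_W size_drop.
  by rewrite (_ : (size w - size a < N)%N = true) //; apply: leq_ltn_trans hw; apply: leq_subr.
transitivity (\sum_(a <- W N) \sum_(0 <= i < (size w).+1) ((a == take i w)%:R * G a)).
  by apply: eq_bigr => a _; rewrite -big_distrl /= cnt.
rewrite exchange_big /= big_nat_cond [RHS]big_nat_cond.
apply: eq_bigr => i /andP[/andP[_ hi] _].
rewrite sumeq ?uniq_W // mem_W.
rewrite /G size_takel; last by rewrite -ltnS.
rewrite (_ : (i < N)%N = true) //; exact: (leq_trans hi hw).
Qed.

Lemma rhoN_mul N f g N1 N2 h m : bnd f N1 -> bnd g N2 -> (N1 + N2 <= N)%N ->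
  rhoN N (emul f g) h m = rhoN N f (rhoN N g h) m.
Proof.
move=> hf hg hN; rewrite /rhoN.
pose F a b := f a * g b * rw (a ++ b) h m.
have hF : forall a b, (N <= size a + size b)%N -> F a b = 0.
  move=> a b hab; rewrite /F; case: (leqP N1 (size a)) => ha; first by rewrite hf ?mul0r.
  rewrite hg ?mulr0 ?mul0r //; lia.
transitivity (\sum_(w <- W N) \sum_(0 <= i < (size w).+1) F (take i w) (drop i w)).
  apply: eq_bigr => w _; rewrite emulE big_distrl /=; apply: eq_bigr => i _.
  by rewrite /F cat_take_drop.
rewrite Kc //; apply: eq_bigr => a _; rewrite /F rw_lin mulr_sumr; apply: eq_bigr => b _.
by rewrite rw_cat mulrA.
Qed.


Definition rep (f : E) (T : V -> V) :=
  exists K, bnd f K /\ forall N, (K <= N)%N -> forall h m, rhoN N f h m = T h m.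

Lemma rep_ext f T T' : rep f T -> (forall h m, T h m = T' h m) -> rep f T'.
Proof. by move=> [K [hb hr]] e; exists K; split => // N hN h m; rewrite hr // e. Qed.
Lemma rep_eq f g T : rep f T -> f = g -> rep g T.
Proof. by move=> h <-. Qed.

Lemma rep_mul f g T1 T2 : rep f T1 -> rep g T2 -> rep (emul f g) (fun h => T1 (T2 h)).
Proof.
move=> [K1 [b1 r1]] [K2 [b2 r2]]; exists (K1 + K2); split; first exact: bnd_mul.
move=> N hN h m; rewrite (rhoN_mul h m b1 b2 hN) r1; last by lia.
congr T1; apply: functional_extensionality => m'; rewrite r2 //; lia.
Qed.
Lemma rep_word u : rep (eword R u) (rw u).
Proof.
exists (size u).+1; split; first exact: bnd_word.
by move=> N hN h m; rewrite rhoN_word.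
Qed.
Lemma rep_add f g T1 T2 : rep f T1 -> rep g T2 -> rep (eadd f g) (fun h m => T1 h m + T2 h m).
Proof.
move=> [K1 [b1 r1]] [K2 [b2 r2]]; exists (maxn K1 K2); split; first exact: bnd_add.
by move=> N hN h m; rewrite rhoN_add r1 ?r2 //; lia.
Qed.
Lemma rep_scale a f T : rep f T -> rep (escale a f) (fun h m => a * T h m).
Proof.
move=> [K [b r]]; exists K; split; first exact: bnd_scale.
by move=> N hN h m; rewrite rhoN_scale r.
Qed.
Lemma rep_sub f g T1 T2 : rep f T1 -> rep g T2 -> rep (esub f g) (fun h m => T1 h m - T2 h m).
Proof.
move=> h1 h2; apply: rep_ext (rep_add h1 (rep_scale (-1) h2)) _ => h m; ring.
Qed.

Lemma rep_X1 : rep (X1 R) opA1. Proof. exact: rep_word [:: gX1]. Qed.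
Lemma rep_X1s : rep (X1s R) opB1. Proof. exact: rep_word [:: gX1s]. Qed.
Lemma rep_X2 : rep (X2 R) opA2. Proof. exact: rep_word [:: gX2]. Qed.
Lemma rep_X2s : rep (X2s R) opB2. Proof. exact: rep_word [:: gX2s]. Qed.
Lemma rep_Q : rep (Q R) opQ. Proof. exact: rep_word [:: gQ]. Qed.

Lemma rep_Q' : rep (Q' R) opP.
Proof.
apply: rep_ext (rep_sub (rep_sub rep_Q (rep_mul rep_X1 rep_X1s)) (rep_mul rep_X2 rep_X2s)) _.
by move=> h m; rewrite /opQ; ring.
Qed.

Lemma rep_epow f T n : rep f T -> rep (epow f n) (iter n T).
Proof.
move=> hf; elim: n => [|n IH]; first exact: rep_word [::].
exact: rep_mul hf IH.
Qed.

Lemma rep_mono r s t u v : rep (mono R (r, s, t, u, v))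
  (fun h => iter r opA1 (iter s opA2 (iter t opB2 (iter u opB1 (iter v opP h))))).
Proof.
rewrite /mono.
apply: (rep_mul (T1 := fun h => iter r opA1 (iter s opA2 (iter t opB2 (iter u opB1 h))))) (rep_epow v rep_Q').
apply: (rep_mul (T1 := fun h => iter r opA1 (iter s opA2 (iter t opB2 h)))) (rep_epow u rep_X1s).
apply: (rep_mul (T1 := fun h => iter r opA1 (iter s opA2 h))) (rep_epow t rep_X2s).
exact: rep_mul (rep_epow r rep_X1) (rep_epow s rep_X2).
Qed.

Lemma opext (X : V -> V) (h1 h2 : V) : (forall m, h1 m = h2 m) -> X h1 = X h2.
Proof. by move=> e; congr X; apply: functional_extensionality. Qed.

Lemma app_add T (h1 h2 : V) m : app T (fun x => h1 x + h2 x) m = app T h1 m + app T h2 m.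
Proof. by rewrite /app -big_split; apply: eq_bigr => y _; rewrite mulrDr. Qed.
Lemma app_scale T a (h : V) m : app T (fun x => a * h x) m = a * app T h m.
Proof. by rewrite /app mulr_sumr; apply: eq_bigr => y _; rewrite mulrCA. Qed.

Lemma A1add h1 h2 m : opA1 (fun x => h1 x + h2 x) m = opA1 h1 m + opA1 h2 m. Proof. exact: app_add. Qed.
Lemma A2add h1 h2 m : opA2 (fun x => h1 x + h2 x) m = opA2 h1 m + opA2 h2 m. Proof. exact: app_add. Qed.
Lemma B1add h1 h2 m : opB1 (fun x => h1 x + h2 x) m = opB1 h1 m + opB1 h2 m. Proof. exact: app_add. Qed.
Lemma B2add h1 h2 m : opB2 (fun x => h1 x + h2 x) m = opB2 h1 m + opB2 h2 m. Proof. exact: app_add. Qed.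
Lemma Padd h1 h2 m : opP (fun x => h1 x + h2 x) m = opP h1 m + opP h2 m. Proof. exact: app_add. Qed.
Lemma A1sc a h m : opA1 (fun x => a * h x) m = a * opA1 h m. Proof. exact: app_scale. Qed.
Lemma A2sc a h m : opA2 (fun x => a * h x) m = a * opA2 h m. Proof. exact: app_scale. Qed.
Lemma B1sc a h m : opB1 (fun x => a * h x) m = a * opB1 h m. Proof. exact: app_scale. Qed.
Lemma B2sc a h m : opB2 (fun x => a * h x) m = a * opB2 h m. Proof. exact: app_scale. Qed.
Lemma Psc a h m : opP (fun x => a * h x) m = a * opP h m. Proof. exact: app_scale. Qed.

Lemma id4' g m : opB1 (opA1 g) m = opA1 (opB1 g) m + (1 - p ^+ 2) * opP g m.
Proof. rewrite id4 /opQ; ring. Qed.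
Lemma id1' g m : opA2 (opA1 g) m = p^-1 * opA1 (opA2 g) m.
Proof. rewrite id1 mulrA mulVf ?mul1r //; exact: pneq0'. Qed.
Lemma id9' g m : opB1 (opB2 g) m = p^-1 * opB2 (opB1 g) m.
Proof. rewrite id9 mulrA mulVf ?mul1r //; exact: pneq0'. Qed.
Lemma pB1' g m : opP (opB1 g) m = (p ^+ 2)^-1 * opB1 (opP g) m.
Proof. rewrite pB1 mulrA mulVf ?mul1r //; apply: expf_neq0; exact: pneq0'. Qed.

Lemma id5 g m : opQ (opA1 g) m = opA1 (opQ g) m.
Proof.
rewrite /opQ pA1 (opext opA1 (id4' g)) (opext opA2 (id10 g)) A1add A1sc A2sc id1'.
rewrite !A1add; field; exact: pneq0'.
Qed.
Lemma id6 g m : opQ (opB1 g) m = opB1 (opQ g) m.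
Proof.
rewrite /opQ !B1add id4' pB1' id2 (opext opA2 (id9' g)) A2sc.
field; exact: pneq0'.
Qed.
Lemma id7 g m : opQ (opA2 g) m = opA2 (opQ g) m.
Proof.
rewrite /opQ pA2 (opext opA1 (id2 g)) (opext opA2 (id3 g)) A1sc id1 !A2add !A2sc.
rewrite /opQ !A2add; ring.
Qed.
Lemma id8 g m : opQ (opB2 g) m = opB2 (opQ g) m.
Proof.
rewrite /opQ !B2add pB2 id10 (opext opA1 (id9 g)) A1sc id3 /opQ; ring.
Qed.

Lemma Inv_ideal f : in_ideal q f -> rep f (fun _ _ => 0).
Proof.
elim=> {f} [i hi | f g _ hf _ hg | a f _ hf | u f _ hf | u f _ hf | f g _ hf e].
- move: hi; rewrite /rels /=.
  case: i => [|[|[|[|[|[|[|[|[|[|i]]]]]]]]]] hi //=.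
  + apply: rep_ext (rep_sub (rep_mul rep_X1 rep_X2) (rep_scale _ (rep_mul rep_X2 rep_X1))) _.
    by move=> h m; rewrite id1 subrr.
  + apply: rep_ext (rep_sub (rep_mul rep_X1s rep_X2) (rep_scale _ (rep_mul rep_X2 rep_X1s))) _.
    by move=> h m; rewrite id2 subrr.
  + apply: rep_ext (rep_sub (rep_mul rep_X2s rep_X2)
      (rep_add (rep_scale _ (rep_mul rep_X2 rep_X2s)) (rep_scale _ rep_Q))) _.
    by move=> h m; rewrite id3 subrr.
  + apply: rep_ext (rep_sub (rep_mul rep_X1s rep_X1)
      (rep_add (rep_scale _ (rep_mul rep_X1 rep_X1s)) (rep_scale _ (rep_sub rep_Q (rep_mul rep_X2 rep_X2s))))) _.
    by move=> h m; rewrite id4 subrr.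
  + apply: rep_ext (rep_sub (rep_mul rep_Q rep_X1) (rep_mul rep_X1 rep_Q)) _.
    by move=> h m; rewrite id5 subrr.
  + apply: rep_ext (rep_sub (rep_mul rep_Q rep_X1s) (rep_mul rep_X1s rep_Q)) _.
    by move=> h m; rewrite id6 subrr.
  + apply: rep_ext (rep_sub (rep_mul rep_Q rep_X2) (rep_mul rep_X2 rep_Q)) _.
    by move=> h m; rewrite id7 subrr.
  + apply: rep_ext (rep_sub (rep_mul rep_Q rep_X2s) (rep_mul rep_X2s rep_Q)) _.
    by move=> h m; rewrite id8 subrr.
  + apply: rep_ext (rep_sub (rep_mul rep_X2s rep_X1s) (rep_scale _ (rep_mul rep_X1s rep_X2s))) _.
    by move=> h m; rewrite id9 subrr.
  + apply: rep_ext (rep_sub (rep_mul rep_X2s rep_X1) (rep_scale _ (rep_mul rep_X1 rep_X2s))) _.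
    by move=> h m; rewrite id10 subrr.
- by apply: rep_ext (rep_add hf hg) _ => h m; rewrite addr0.
- by apply: rep_ext (rep_scale a hf) _ => h m; rewrite mulr0.
- by apply: rep_ext (rep_mul (rep_word u) hf) _ => h m; rewrite rw0.
- exact: rep_ext (rep_mul hf (rep_word u)) _.
- by rewrite -(functional_extensionality _ _ e).
Qed.

Definition delta (m0 : idx) : V := fun m => (m == m0)%:R.

Lemma eqS0 n : (n.+1 == 0)%N = false. Proof. by []. Qed.
Lemma eq0S n : (0 == n.+1)%N = false. Proof. by []. Qed.

Ltac dsimp := apply: functional_extensionality => -[[[[a b] c] d] e];
  rewrite /delta; rsimp; rewrite !xpair_eqE.

Lemma dP v : opP (delta (0,0,0,0,v)) = delta (0,0,0,0,v.+1).
Proof.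
dsimp; case: a => [|a]; case: b => [|b]; case: c => [|c]; case: d => [|d]; case: e => [|e];
  rewrite /= ?eqS0 ?eq0S ?eqSS ?andbF ?andFb ?expr0 /=; ring.
Qed.
Lemma dB1 u v : opB1 (delta (0,0,0,u,v)) = delta (0,0,0,u.+1,v).
Proof.
dsimp; case: a => [|a]; case: b => [|b]; case: c => [|c]; case: d => [|d]; case: e => [|e];
  rewrite /= ?eqS0 ?eq0S ?eqSS ?andbF ?andFb ?expr0 /=; ring.
Qed.
Lemma dB2 t u v : opB2 (delta (0,0,t,u,v)) = delta (0,0,t.+1,u,v).
Proof.
dsimp; case: a => [|a]; case: b => [|b]; case: c => [|c]; case: d => [|d]; case: e => [|e];
  rewrite /= ?eqS0 ?eq0S ?eqSS ?andbF ?andFb ?expr0 /=; ring.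
Qed.
Lemma dA2 s t u v : opA2 (delta (0,s,t,u,v)) = delta (0,s.+1,t,u,v).
Proof.
dsimp; case: a => [|a]; case: b => [|b]; case: c => [|c]; case: d => [|d]; case: e => [|e];
  rewrite /= ?eqS0 ?eq0S ?eqSS ?andbF ?andFb ?expr0 /=; ring.
Qed.
Lemma dA1 r s t u v : opA1 (delta (r,s,t,u,v)) = delta (r.+1,s,t,u,v).
Proof.
dsimp; case: a => [|a]; case: b => [|b]; case: c => [|c]; case: d => [|d]; case: e => [|e];
  rewrite /= ?eqS0 ?eq0S ?eqSS ?andbF ?andFb ?expr0 /=; ring.
Qed.

Definition Tm (m' : idx) : V -> V := let '(r,s,t,u,v) := m' in
  fun h => iter r opA1 (iter s opA2 (iter t opB2 (iter u opB1 (iter v opP h)))).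
Lemma rep_mono' m' : rep (mono R m') (Tm m').
Proof. case: m' => [[[[r s] t] u] v]; exact: rep_mono. Qed.

Lemma Tm_delta m' : Tm m' (delta (0,0,0,0,0)) = delta m'.
Proof.
case: m' => [[[[r s] t] u] v] /=.
have -> : iter v opP (delta (0,0,0,0,0)) = delta (0,0,0,0,v).
  by elim: v => [//|v IH] /=; rewrite IH dP.
have -> : iter u opB1 (delta (0,0,0,0,v)) = delta (0,0,0,u,v).
  by elim: u => [//|u IH] /=; rewrite IH dB1.
have -> : iter t opB2 (delta (0,0,0,u,v)) = delta (0,0,t,u,v).
  by elim: t => [//|t IH] /=; rewrite IH dB2.
have -> : iter s opA2 (delta (0,0,t,u,v)) = delta (0,s,t,u,v).
  by elim: s => [//|s IH] /=; rewrite IH dA2.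
by elim: r => [//|r IH] /=; rewrite IH dA1.
Qed.

Lemma rhoN_lincomb N s c h x :
  rhoN N (lincomb s c) h x = \sum_(m' <- s) c m' * rhoN N (mono R m') h x.
Proof.
rewrite /lincomb; elim: s => [|m' s IH] /=; first by rewrite rhoN_zero big_nil.
by rewrite rhoN_add rhoN_scale IH big_cons.
Qed.

Lemma bound_all (s : seq idx) : exists K, forall m', m' \in s -> forall N, (K <= N)%N ->
  forall h x, rhoN N (mono R m') h x = Tm m' h x.
Proof.
elim: s => [|m' s [K IH]]; first by exists 0.
have [K1 [_ h1]] := rep_mono' m'.
exists (maxn K K1) => m0; rewrite inE => /orP[/eqP -> | hm] N hN h x.
  by apply: h1; apply: leq_trans hN; apply: leq_maxr.
by apply: IH => //; apply: leq_trans hN; apply: leq_maxl.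
Qed.

Lemma indep (s : seq idx) (c : idx -> C) : uniq s -> in_ideal q (lincomb s c) -> forall m, m \in s -> c m = 0.
Proof.
move=> us hI m ms.
have [K0 [_ h0]] := Inv_ideal hI.
have [K1 h1] := bound_all s.
have := h0 (maxn K0 K1) (leq_maxl _ _) (delta (0,0,0,0,0)) m.
rewrite rhoN_lincomb.
rewrite (eq_big_seq (fun m' => (m' == m)%:R * c m')); last first.
  move=> m' hm'; rewrite h1 ?leq_maxr // Tm_delta /delta mulrC.
  by congr (_ * _); rewrite eq_sym.
by rewrite sumeq // ms.
Qed.
End E.


Section M.
Variable R : realType.
Variable q : R.
Local Notation C := (R[i]).
Local Notation E := (elt R).

Lemma lcl_pt (L : seq (C * idx)) w : lcl L w = \sum_(x <- L) x.1 * mono R x.2 w.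
Proof.
elim: L => [|x L IH] /=; first by rewrite big_nil.
by rewrite big_cons /eadd /escale IH.
Qed.
Lemma lincomb_pt (s : seq idx) (c : idx -> C) w : lincomb s c w = \sum_(m <- s) c m * mono R m w.
Proof.
rewrite /lincomb; elim: s => [|x s IH] /=; first by rewrite big_nil.
by rewrite big_cons /eadd /escale IH.
Qed.

Lemma lcl_lincomb (L : seq (C * idx)) :
  lcl L = lincomb (undup (map snd L)) (fun m => \sum_(x <- L | x.2 == m) x.1).
Proof.
apply: eext => w; rewrite lcl_pt lincomb_pt.
transitivity (\sum_(m <- undup (map snd L)) \sum_(x <- L)
   ((m == x.2)%:R * (x.1 * mono R x.2 w))).
  rewrite exchange_big /=; apply: eq_big_seq => x xL.
  rewrite (@sumeq _ _ (undup (map snd L)) x.2 (fun _ => x.1 * mono R x.2 w)) ?undup_uniq //.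
  by rewrite mem_undup (map_f snd xL).
apply: eq_bigr => m _; rewrite [RHS]big_distrl [RHS]big_mkcond /=; apply: eq_bigr => x _.
have [e|ne] := eqVneq m x.2; first by rewrite -e mul1r /= ?eqxx.
by rewrite mul0r.
Qed.

End M.

Theorem lemma3p5p5 (R : realType) (q : R) (hq0 : 0 < q) (hq1 : q < 1) :
  (forall f : elt R, fin_supp f ->
     exists (s : seq idx) (c : idx -> R[i]),
       in_ideal q (esub f (lincomb s c)))
  /\
  (forall (s : seq idx) (c : idx -> R[i]), uniq s ->
     in_ideal q (lincomb s c) -> forall m, m \in s -> c m = 0).
Proof.
split.
- move=> f /fin_bnd [N hN].
  have [L hL] : Sp q f by rewrite (bnd_decomp hN); apply: Sesum.
  exists (undup (map snd L)), (fun m => \sum_(x <- L | x.2 == m) x.1).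
  by rewrite -lcl_lincomb.
- move=> s c us hI m ms; exact: (indep hq0 us hI ms).
Qed.
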